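(* Let $\mathcal{R}$ be a tolerance relation on $X=\{1,\dots,n\}$ with chordal graph $G(\mathcal{R})$ and set of maximal cliques $\mathcal{C}$. A nonzero element $(x_{ij})\in E(\mathcal{R})^d_+$ generates an extremal ray of the cone $E(\mathcal{R})^d_+$ if and only if both of the following hold: (1) for every $C\in\mathcal{C}$ the matrix $(x_{ij})_{i,j\in C}$ has rank one or zero; (2) the subgraph of $G(\mathcal{R})$ induced by the vertex set $\{i\in X\mid x_{ii}\neq 0\}$ is connected.
   Context: A tolerance relation on $X=\{1,\dots,n\}$ is a reflexive symmetric relation $\mathcal{R}\subseteq X\times X$; its graph $G(\mathcal{R})$ has vertex set $X$ and an edge between distinct $i,j$ iff $(i,j)\in\mathcal{R}$. A graph is chordal if every cycle of length at least 4 has a chord. $E(\mathcal{R})=\{(x_{ij})\in M_n(\mathbb{C})\mid x_{ij}=0\text{ if }(i,j)\notin\mathcal{R}\}$. The dual $E(\mathcal{R})^d$ is identified with the vector space $E(\mathcal{R})$, with positive cone $E(\mathcal{R})^d_+=\{M\in E(\mathcal{R})\mid \exists N\in M_n(\mathbb{C})\text{ with }N_{ij}=0\text{ for all }(i,j)\in\mathcal{R},\ M+N\text{ positive semidefinite}\}$. A ray is a set $\{\lambda\varphi\mid\lambda\ge0\}$ with $0\neq\varphi$ in the cone; it is extremal if whenever $\varphi_1,\varphi_2$ are in the cone and $\varphi_1+\varphi_2$ lies in the ray, both $\varphi_1,\varphi_2$ lie in the ray. *)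

(* Defs.v *)
(* The field of complex numbers is modelled in the statement
   as R[i] (mathcomp-real-closed's complex construction) over R : realType.
   The definitions below are generic over a numClosedFieldType C. *)
From HB Require Import structures.
From mathcomp Require Import all_boot all_order all_algebra.
From mathcomp Require Export reals.
From mathcomp.real_closed Require Export complex.

Set Implicit Arguments.
Unset Strict Implicit.
Unset Printing Implicit Defensive.

Import Order.TTheory GRing.Theory Num.Theory.
Local Open Scope ring_scope.

Section Defs.

Variable C : numClosedFieldType.
Variable n : nat.

Definition ctrmx (M : 'M[C]_n) : 'M[C]_n := \matrix_(i, j) (M j i)^*.

Definition ctrcv (v : 'cV[C]_n) : 'rV[C]_n := \row_j (v j 0)^*.

Definition psd (M : 'M[C]_n) : Prop :=
  ctrmx M = M /\ forall v : 'cV[C]_n, 0 <= (ctrcv v *m M *m v) 0 0.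

Definition tolerance (Rl : rel 'I_n) : Prop := reflexive Rl /\ symmetric Rl.

Definition gadj (Rl : rel 'I_n) : rel 'I_n := fun i j => (i != j) && Rl i j.

(* a graph cycle given by a duplicate-free list of vertices, of length >= 4,
   consecutive (cyclically) vertices adjacent; a chord is an edge between two
   vertices of the cycle that are not consecutive on it *)
Definition has_chord (e : rel 'I_n) (s : seq 'I_n) : Prop :=
  exists x y, [/\ x \in s, y \in s, x != y &
                  [/\ y != next s x, x != next s y & e x y]].

Definition chordal (e : rel 'I_n) : Prop :=
  forall s : seq 'I_n, uniq s -> (3 < size s)%N -> cycle e s -> has_chord e s.

Definition clique (Rl : rel 'I_n) (K : {set 'I_n}) : Prop :=
  forall i j, i \in K -> j \in K -> i != j -> gadj Rl i j.

Definition maximal_clique (Rl : rel 'I_n) (K : {set 'I_n}) : Prop :=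
  clique Rl K /\ forall K', clique Rl K' -> K \subset K' -> K' = K.

Definition induced_connected (Rl : rel 'I_n) (S : {set 'I_n}) : Prop :=
  forall i j, i \in S -> j \in S ->
    connect [rel a b | [&& a \in S, b \in S & gadj Rl a b]] i j.

Definition subsq (K : {set 'I_n}) (M : 'M[C]_n) : 'M[C]_#|K| :=
  \matrix_(i, j) M (enum_val i) (enum_val j).

Definition in_E (Rl : rel 'I_n) (M : 'M[C]_n) : Prop :=
  forall i j, ~~ Rl i j -> M i j = 0.

Definition dual_cone (Rl : rel 'I_n) (M : 'M[C]_n) : Prop :=
  in_E Rl M /\
  exists N : 'M[C]_n, (forall i j, Rl i j -> N i j = 0) /\ psd (M + N).

Definition in_ray (phi psi : 'M[C]_n) : Prop :=
  exists2 l : C, 0 <= l & psi = l *: phi.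

Definition extremal_ray (K : 'M[C]_n -> Prop) (phi : 'M[C]_n) : Prop :=
  [/\ K phi, phi != 0 &
      forall p1 p2, K p1 -> K p2 -> in_ray phi (p1 + p2) ->
        in_ray phi p1 /\ in_ray phi p2].

End Defs.

(* Main.v *)
Require Import Defs.
From HB Require Import structures.
From mathcomp Require Import all_boot all_order all_algebra.
From mathcomp Require Import reals.
From mathcomp.real_closed Require Import complex.
From mathcomp Require Import ring.
Import Order.TTheory GRing.Theory Num.Theory.
Local Open Scope ring_scope.

Set Implicit Arguments.
Unset Strict Implicit.
Unset Printing Implicit Defensive.

Section Forms.
Variable C : numClosedFieldType.
Variable n : nat.
Implicit Types (M P : 'M[C]_n) (u v w : 'cV[C]_n).

Definition form M u w : C := (ctrcv u *m M *m w) 0 0.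
Definition ev (m : 'I_n) : 'cV[C]_n := delta_mx m 0.

Lemma formE M u w :
  form M u w = \sum_a \sum_b (u a 0)^* * M a b * w b 0.
Proof.
rewrite /form mxE exchange_big /=; apply: eq_bigr => b _.
rewrite mxE mulr_suml; apply: eq_bigr => a _.
by rewrite mxE.
Qed.

Lemma formDr M u (a : C) w w' :
  form M u (a *: w + w') = a * form M u w + form M u w'.
Proof. by rewrite /form mulmxDr -scalemxAr !mxE. Qed.

Lemma formZr M u (a : C) w : form M u (a *: w) = a * form M u w.
Proof. by rewrite /form -scalemxAr mxE. Qed.

Lemma ctrcvD (a : C) u u' : ctrcv (a *: u + u') = a^* *: ctrcv u + ctrcv u'.
Proof. by apply/rowP => j; rewrite !mxE rmorphD rmorphM. Qed.

Lemma formDl M (a : C) u u' w :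
  form M (a *: u + u') w = a^* * form M u w + form M u' w.
Proof. by rewrite /form ctrcvD !mulmxDl -!scalemxAl !mxE. Qed.

Lemma formZl M (a : C) u w : form M (a *: u) w = a^* * form M u w.
Proof.
rewrite /form; have -> : ctrcv (a *: u) = a^* *: ctrcv u by apply/rowP => j; rewrite !mxE rmorphM.
by rewrite /form -!scalemxAl mxE.
Qed.

Lemma formDM M M' u w : form (M + M') u w = form M u w + form M' u w.
Proof. by rewrite /form mulmxDr mulmxDl mxE. Qed.

Lemma formBM M M' u w : form (M - M') u w = form M u w - form M' u w.
Proof. by rewrite /form mulmxBr mulmxBl mxE [X in _ + X]mxE. Qed.

Lemma herm_entry M : ctrmx M = M -> forall i j, (M i j)^* = M j i.
Proof. by move=> h i j; rewrite -{2}h mxE. Qed.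

Lemma form_herm M : ctrmx M = M -> forall u w, form M w u = (form M u w)^*.
Proof.
move=> h u w; rewrite !formE.
rewrite rmorph_sum; under [RHS]eq_bigr do rewrite rmorph_sum.
rewrite [RHS]exchange_big /=.
apply: eq_bigr => a _; apply: eq_bigr => b _.
by rewrite !rmorphM /= conjCK herm_entry //; ring.
Qed.

Lemma form_evl M m w : form M (ev m) w = (M *m w) m 0.
Proof.
rewrite formE [RHS]mxE (bigD1 m) //= [X in _ + X]big1 => [|a ham].
  rewrite addr0; apply: eq_bigr => b _; by rewrite !mxE !eqxx /= rmorph1 mul1r.
rewrite big1 // => b _; by rewrite !mxE (negbTE ham) /= rmorph0 !mul0r.
Qed.

Lemma mulmx_ev M i m : (M *m ev m) i 0 = M i m.
Proof.
rewrite mxE (bigD1 m) //= big1 => [|a ham]; first by rewrite !mxE !eqxx mulr1 addr0.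
by rewrite !mxE (negbTE ham) mulr0.
Qed.

Lemma form_ev M i j : form M (ev i) (ev j) = M i j.
Proof. by rewrite form_evl mulmx_ev. Qed.

Lemma psd_diag M : psd M -> forall i, 0 <= M i i.
Proof. by case=> _ h i; rewrite -form_ev; apply: h. Qed.

Lemma psd_ker M v : psd M -> form M v v = 0 -> M *m v = 0.
Proof.
move=> hP hv; have [hH hpos] := hP.
apply/colP => m; rewrite [RHS]mxE.
set b := (M *m v) m 0.
set a := M m m.
have ha : 0 <= a by apply: psd_diag.
pose s := a + 1.
have hs : s^* = s by apply: geC0_conj; rewrite /s addr_ge0 // ler01.
pose w := s *: v + (- b) *: ev m.
have hq : 0 <= form M w w := hpos w.
have e1 : form M (ev m) v = b by rewrite form_evl.
have e2 : form M v (ev m) = b^* by rewrite (form_herm hH) e1.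
have e3 : form M (ev m) (ev m) = a by rewrite form_ev.
have ha' : a^* = a by apply: geC0_conj.
move: hq; rewrite /w formDl formZl !formDr !formZr hv e1 e2 e3 hs rmorphN.
have -> : s * (s * 0 + - b * b^*) + - b^* * (s * b + - b * a) =
   - ((b * b^*) * (a + 2)) by rewrite /s; ring.
rewrite oppr_ge0 => hle.
have hb0 : b * b^* = 0.
  apply/eqP; rewrite eq_le mul_conjC_ge0 andbT.
  have h2 : 0 < a + 2 by apply: ltr_wpDl.
  by move: hle; rewrite mulrC (pmulr_rle0 _ h2).
move/eqP: hb0; rewrite mulf_eq0 conjC_eq0 orbb => /eqP; exact.
Qed.



Lemma psd_zero_diag M i : psd M -> M i i = 0 -> forall j, M j i = 0 /\ M i j = 0.
Proof.
move=> hP hi j; have [hH _] := hP.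
have hk := psd_ker hP (etrans (form_ev M i i) hi).
have hji : M j i = 0 by rewrite -mulmx_ev hk mxE.
by split => //; rewrite -herm_entry // hji rmorph0.
Qed.

Definition resS (T : {set 'I_n}) M : 'M[C]_n :=
  \matrix_(i, j) if (i \in T) && (j \in T) then M i j else 0.

Lemma psd_resS T M : psd M -> psd (resS T M).
Proof.
case=> hH hpos; split.
  apply/matrixP => i j; rewrite !mxE.
  by case: (i \in T); case: (j \in T) => //=; rewrite ?rmorph0 // herm_entry.
move=> v; pose w : 'cV[C]_n := \col_a (if a \in T then v a 0 else 0).
have -> : (ctrcv v *m resS T M *m v) 0 0 = form M w w.
  rewrite -/(form _ _ _) !formE; apply: eq_bigr => a _; apply: eq_bigr => b _.
  rewrite !mxE; case: (a \in T); case: (b \in T) => /=;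
    by rewrite ?rmorph0 ?mul0r ?mulr0 // ; apply: mul0r.
exact: (hpos w).
Qed.

Lemma form_evr M u m : form M u (ev m) = \sum_a (u a 0)^* * M a m.
Proof.
rewrite formE; apply: eq_bigr => a _.
rewrite (bigD1 m) //= big1 => [|b hbm]; first by rewrite !mxE !eqxx mulr1 addr0.
by rewrite !mxE (negbTE hbm) mulr0.
Qed.

Definition Wk P k : 'M[C]_n := \matrix_(i, j) (P i k * P k j / P k k).

Lemma form_Wk P k u w :
  form (Wk P k) u w = form P u (ev k) * form P (ev k) w / P k k.
Proof.
rewrite formE form_evr form_evl mulr_suml mulr_suml; apply: eq_bigr => a _.
rewrite mxE mulr_sumr mulr_suml; apply: eq_bigr => b _.
by rewrite !mxE; ring.
Qed.

Lemma psd_Wk P k : psd P -> P k k != 0 -> psd (Wk P k) /\ psd (P - Wk P k).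
Proof.
move=> hP hk; have [hH hpos] := hP.
have hp : (P k k)^* = P k k by apply: geC0_conj; apply: psd_diag.
have hp0 : 0 <= P k k by apply: psd_diag.
have hWH : ctrmx (Wk P k) = Wk P k.
  apply/matrixP => i j; rewrite !mxE rmorphM fmorphV rmorphM /= hp !herm_entry //.
  by rewrite [P k j * _]mulrC.
have hq : forall v, form (Wk P k) v v = (form P (ev k) v)^* * form P (ev k) v / P k k.
  by move=> v; rewrite form_Wk -(form_herm hH).
split.
  split => // v; rewrite -/(form _ _ _) hq; apply: divr_ge0 => //.
  by rewrite mulrC mul_conjC_ge0.
split.
  apply/matrixP => i j; rewrite !mxE rmorphB /= herm_entry //.
  by move/matrixP: hWH => /(_ i j); rewrite !mxE => ->.
move=> v; rewrite -/(form _ _ _) formBM hq.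
set be := form P (ev k) v.
pose t := - be / P k k.
have := hpos (t *: ev k + v); rewrite -/(form _ _ _).
rewrite formDl !formDr form_ev -/be (form_herm hH (ev k) v) -/be.
have -> : t^* = - be^* / P k k by rewrite /t rmorphM fmorphV rmorphN /= hp.
suff -> : - be^* / P k k * (t * P k k + be) + (t * be^* + form P v v) =
   form P v v - be^* * be / P k k by [].
by rewrite /t; field.
Qed.

End Forms.
Arguments ev {C n} m.

Section Main.
Variable C : numClosedFieldType.
Variable n : nat.
Variable Rl : rel 'I_n.
Hypothesis hR : tolerance Rl.
Implicit Types (x p P : 'M[C]_n).

Lemma Rrefl i : Rl i i. Proof. by case: hR => r _; apply: r. Qed.
Lemma Rsym i j : Rl i j = Rl j i. Proof. by case: hR => _ s; apply: s. Qed.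

Lemma cone_P p : dual_cone Rl p ->
  exists P, psd P /\ forall i j, Rl i j -> P i j = p i j.
Proof.
case=> _ [N [hN hP]]; exists (p + N); split => // i j hij.
by rewrite mxE hN // addr0.
Qed.

Lemma cone_herm p i j : dual_cone Rl p -> (p i j)^* = p j i.
Proof.
move=> hp; have [P [[hH _] hPp]] := cone_P hp.
case hij : (Rl i j).
  by rewrite -hPp // herm_entry // hPp // Rsym.
have hji : ~~ Rl j i by rewrite Rsym hij.
by rewrite (hp.1 _ _ (negbT hij)) (hp.1 _ _ hji) rmorph0.
Qed.

Lemma cone_diag p i : dual_cone Rl p -> 0 <= p i i.
Proof.
move=> hp; have [P [hP hPp]] := cone_P hp.
by rewrite -hPp ?Rrefl //; apply: psd_diag.
Qed.

Lemma cone_zero p i : dual_cone Rl p -> p i i = 0 -> forall j, p i j = 0 /\ p j i = 0.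
Proof.
move=> hp hi j; have [P [hP hPp]] := cone_P hp.
have hPi : P i i = 0 by rewrite hPp ?Rrefl.
have [h1 h2] := psd_zero_diag hP hPi j.
case hij : (Rl i j).
  by rewrite -!hPp // Rsym.
have hji : ~~ Rl j i by rewrite Rsym hij.
by rewrite (hp.1 _ _ (negbT hij)) (hp.1 _ _ hji).
Qed.

Lemma cone_nz_diag x : dual_cone Rl x -> x != 0 -> exists k, x k k != 0.
Proof.
move=> hx hx0; case: (pickP (fun k => x k k != 0)) => [k hk | h]; first by exists k.
case/eqP: hx0; apply/matrixP => i j; rewrite mxE.
have := h i; move=> /negbFE /eqP hi.
by have [-> _] := cone_zero hx hi j.
Qed.

Definition resR M : 'M[C]_n := \matrix_(i, j) if Rl i j then M i j else 0.

Lemma rank_outer (m : nat) (c : 'I_m -> C) (r : 'I_m -> C) (M : 'M[C]_m) :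
  (forall a b, M a b = c a * r b) -> (\rank M <= 1)%N.
Proof.
move=> hM.
have -> : M = (\col_a c a) *m (\row_b r b).
  apply/matrixP => a b; rewrite hM mxE big_ord1 !mxE //.
by apply: leq_trans (mxrankM_maxl _ _) (rank_leq_col _).
Qed.

Lemma onlyif_rank x : dual_cone Rl x -> x != 0 ->
  extremal_ray (dual_cone Rl) x ->
  forall K, clique Rl K -> (\rank (subsq K x) <= 1)%N.
Proof.
move=> hx hx0 [_ _ hext] K hK.
have [P [hP hPx]] := cone_P hx.
have [k hk] := cone_nz_diag hx hx0.
have hPk : P k k != 0 by rewrite hPx ?Rrefl.
have [hW hPW] := psd_Wk hP hPk.
set W := Wk P k in hW hPW.
pose y := resR W.
pose z := x - y.
have hy : dual_cone Rl y.
  split; first by move=> i j hij; rewrite mxE (negbTE hij).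
  exists (W - y); split; last by rewrite addrC subrK.
  by move=> i j hij; rewrite !mxE hij subrr.
have hz : dual_cone Rl z.
  split; first by move=> i j hij; rewrite !mxE (negbTE hij) (hx.1 _ _ hij) subr0.
  exists ((P - W) - z); split; last by rewrite addrC subrK.
  by move=> i j hij; rewrite !mxE hij (hPx _ _ hij); ring.
have hyz : in_ray x (y + z).
  by exists 1; [exact: ler01 | rewrite scale1r /z addrC subrK].
have [[al hal hyal] _] := hext _ _ hy hz hyz.
have hyk : y k k = P k k by rewrite !mxE Rrefl mulfK.
have hal0 : al != 0.
  by apply: contraNneq hPk => hal0; rewrite -hyk hyal hal0 scale0r mxE.
apply: (@rank_outer _ (fun a => al^-1 * P (enum_val a) k)
                      (fun b => P k (enum_val b) / P k k)).
move=> a b; rewrite mxE.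
have hab : Rl (enum_val a) (enum_val b).
  case: (eqVneq (enum_val a) (enum_val b)) => [->|hne]; first exact: Rrefl.
  by have /andP[_ ->] := hK _ _ (enum_valP a) (enum_valP b) hne.
have : y (enum_val a) (enum_val b) = al * x (enum_val a) (enum_val b).
  by rewrite hyal mxE.
rewrite !mxE hab => h; rewrite -[x _ _](mulKf hal0) -h; ring.
Qed.


Lemma cone_nz p i j : dual_cone Rl p -> p i j != 0 -> p i i != 0.
Proof.
move=> hp hij; apply/negP => /eqP hi; have [h _] := cone_zero hp hi j.
by rewrite h eqxx in hij.
Qed.

Lemma cone_nz' p i j : dual_cone Rl p -> p i j != 0 -> p j j != 0.
Proof.
move=> hp hij; apply/negP => /eqP hj; have [_ h] := cone_zero hp hj i.
by rewrite h eqxx in hij.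
Qed.

Lemma cone_R p i j : dual_cone Rl p -> p i j != 0 -> Rl i j.
Proof. by move=> hp; apply: contraNT => h; rewrite (hp.1 _ _ h). Qed.

Lemma onlyif_conn x : dual_cone Rl x ->
  extremal_ray (dual_cone Rl) x -> induced_connected Rl [set j | x j j != 0].
Proof.
move=> hx [_ _ hext] i0 j0 hi0 hj0.
set e := [rel a b | _].
case: (boolP (connect e i0 j0)) => // hn; exfalso.
pose A := [set m | connect e i0 m].
have key : forall i j, x i j != 0 -> (i \in A) = (j \in A).
  move=> i j hij.
  have hi : i \in [set j | x j j != 0] by rewrite inE (cone_nz hx hij).
  have hj : j \in [set j | x j j != 0] by rewrite inE (cone_nz' hx hij).
  case: (eqVneq i j) => [-> //|hne].
  have hR' := cone_R hx hij.
  have eij : e i j by rewrite /= hi hj /gadj hne hR'.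
  have eji : e j i by rewrite /= hi hj /gadj eq_sym hne Rsym hR'.
  rewrite !inE; apply/idP/idP => h.
    by apply: (connect_trans h); apply: connect1.
  by apply: (connect_trans h); apply: connect1.
have [P [hP hPx]] := cone_P hx.
have hcone : forall T, dual_cone Rl (resS T x).
  move=> T; split; first by move=> i j hij; rewrite mxE (hx.1 _ _ hij) if_same.
  exists (resS T P - resS T x); split; last by rewrite addrC subrK; exact: psd_resS.
  by move=> i j hij; rewrite !mxE (hPx _ _ hij) subrr.
have hsum : in_ray x (resS A x + resS (~: A) x).
  exists 1; first exact: ler01.
  rewrite scale1r; apply/matrixP => i j; rewrite !mxE !inE.
  case: (eqVneq (x i j) 0) => [->|hij]; first by rewrite !if_same addr0.
  have := key i j hij; rewrite !inE => ->.
  by case: (connect e i0 j) => /=; rewrite ?addr0 ?add0r.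
have [[al hal hA] _] := hext _ _ (hcone A) (hcone (~: A)) hsum.
have hxi0 : x i0 i0 != 0 by move: hi0; rewrite inE.
have hxj0 : x j0 j0 != 0 by move: hj0; rewrite inE.
have hi0A : i0 \in A by rewrite inE connect0.
have hj0A : j0 \notin A by rewrite inE.
have hal1 : al = 1.
  move/matrixP: hA => /(_ i0 i0); rewrite !mxE hi0A /= => h.
  by apply: (mulIf hxi0); rewrite -h mul1r.
move/matrixP: hA => /(_ j0 j0); rewrite !mxE (negbTE hj0A) /= hal1 mul1r => h.
by rewrite -h eqxx in hxj0.
Qed.

End Main.

Section IfDir.
Variable C : numClosedFieldType.
Variable n : nat.
Variable Rl : rel 'I_n.
Hypothesis hR : tolerance Rl.
Implicit Types (x p P : 'M[C]_n).

Lemma form_two (M : 'M[C]_n) (i j : 'I_n) (s t : C) :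
  form M (s *: ev i + t *: ev j) (s *: ev i + t *: ev j) =
  s^* * (s * M i i + t * M i j) + t^* * (s * M j i + t * M j j).
Proof.
by rewrite formDl formZl !formDr !formZr !form_ev.
Qed.

Lemma path_const (T : finType) (e : rel T) (f : T -> C) :
  (forall a b, e a b -> f a = f b) ->
  forall (s : seq T) a, path e a s -> f (last a s) = f a.
Proof.
move=> hf; elim=> //= b s IH a /andP[hab hp].
by rewrite IH // (hf _ _ hab).
Qed.

Lemma if_core x p1 p2 (l : C) :
  dual_cone Rl x -> x != 0 ->
  (forall i j, Rl i j -> x i i * x j j = x i j * x j i) ->
  induced_connected Rl [set j | x j j != 0] ->
  dual_cone Rl p1 -> dual_cone Rl p2 -> p1 + p2 = l *: x ->
  in_ray x p1.
Proof.
move=> hx hx0 hminor hconn hp1 hp2 hsum.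
have [Q1 [hQ1 hQ1p]] := cone_P hp1.
have [Q2 [hQ2 hQ2p]] := cone_P hp2.
have hs : forall i j, p1 i j + p2 i j = l * x i j.
  by move=> i j; move/matrixP: hsum => /(_ i j); rewrite !mxE.
have F1 : forall i, x i i = 0 -> forall j, p1 i j = 0 /\ p1 j i = 0.
  move=> i hi; apply: (cone_zero hR hp1).
  have := hs i i; rewrite hi mulr0 => /eqP.
  by rewrite paddr_eq0 ?(cone_diag hR) // => /andP[/eqP -> _].
have F2 : forall i j, Rl i j -> p1 i i * x i j = p1 i j * x i i.
  move=> i j hij.
  case: (eqVneq i j) => [<- //|hne].
  pose v := x i j *: ev i + (- x i i) *: ev j.
  have hxii : (x i i)^* = x i i by apply: geC0_conj; apply: (cone_diag hR).
  have hji : Rl j i by rewrite (Rsym hR).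
  have hQ : forall a b, Rl a b -> (Q1 + Q2) a b = l * x a b.
    by move=> a b hab; rewrite mxE hQ1p // hQ2p // hs.
  have hq : form (Q1 + Q2) v v = 0.
    rewrite /v form_two !hQ ?(Rrefl hR) // rmorphN /= hxii.
    transitivity (l * x i i * (x i i * x j j - x i j * x j i)); first by ring.
    by rewrite hminor // subrr mulr0.
  have hq1 : form Q1 v v = 0.
    move: hq; rewrite formDM => /eqP; rewrite paddr_eq0 ?(hQ1.2 v) ?(hQ2.2 v) //.
    by case/andP => /eqP.
  have hk := psd_ker hQ1 hq1.
  have := congr1 (fun M : 'cV[C]_n => M i 0) hk.
  rewrite /v mulmxDr -!scalemxAr mxE [X in X + _]mxE [X in _ + X]mxE !mulmx_ev.
  rewrite !hQ1p ?(Rrefl hR) // mxE => h.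
  by rewrite -[RHS]addr0 -h; ring.
pose c i := p1 i i / x i i.
have F3 : forall i j, x i i != 0 -> Rl i j -> p1 i j = c i * x i j.
  move=> i j hi hij; rewrite /c.
  by apply: (mulIf hi); rewrite -F2 //; field.
have F4 : forall i, (c i)^* = c i.
  move=> i; apply: geC0_conj; apply: divr_ge0; exact: (cone_diag hR).
have F5 : forall i j, x i i != 0 -> x j j != 0 -> gadj Rl i j -> c i = c j.
  move=> i j hi hj /andP[hne hij].
  have hji : Rl j i by rewrite (Rsym hR).
  have hxji : x j i != 0.
    apply: contraNneq (mulf_neq0 hi hj) => h.
    by rewrite hminor // h mulr0.
  apply: (mulIf hxji).
  rewrite -(F3 _ _ hj hji) -(cone_herm hR i j hp1) (F3 _ _ hi hij).
  by rewrite rmorphM /= F4 (cone_herm hR i j hx).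
have [i0 hi0] := cone_nz_diag hR hx hx0.
have F6 : forall j, x j j != 0 -> c j = c i0.
  move=> j hj.
  have := hconn i0 j; rewrite !inE => /(_ hi0 hj) /connectP [s hps ->].
  apply: (path_const _ hps) => a b /and3P [ha hb hab].
  by move: ha hb; rewrite !inE => ha hb; exact: F5 ha hb hab.
exists (c i0).
  by apply: divr_ge0; exact: (cone_diag hR).
apply/matrixP => i j; rewrite mxE.
case hij : (Rl i j); last first.
  by rewrite (hp1.1 _ _ (negbT hij)) (hx.1 _ _ (negbT hij)) mulr0.
case: (eqVneq (x i i) 0) => [hi|hi].
  have [-> _] := F1 i hi j.
  by have [-> _] := cone_zero hR hx hi j; rewrite mulr0.
by rewrite (F3 _ _ hi hij) F6.
Qed.

End IfDir.

Lemma minor_le1 (C : fieldType) p q r (hr : (r <= 1)%N) (A : 'M[C]_(p, r)) (B : 'M[C]_(r, q))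
  a b c d : (A *m B) a b * (A *m B) c d = (A *m B) a d * (A *m B) c b.
Proof.
case: r hr A B => [|[|r]] // _ A B; rewrite !mxE ?big_ord0 ?big_ord1; ring.
Qed.

Lemma rank_minor (C : fieldType) p q (M : 'M[C]_(p, q)) :
  (\rank M <= 1)%N -> forall a b c d, M a b * M c d = M a d * M c b.
Proof.
move=> hr a b c d; have := minor_le1 hr (col_base M) (row_base M) a b c d.
by rewrite mulmx_base.
Qed.

Section Cliques.
Variable n : nat.
Variable Rl : rel 'I_n.
Hypothesis hR : tolerance Rl.

Definition cliqueb (K : {set 'I_n}) :=
  [forall a, forall b, (a \in K) ==> (b \in K) ==> (a != b) ==> gadj Rl a b].

Lemma cliqueP K : clique Rl K <-> cliqueb K.
Proof.
split.
  move=> h; apply/forallP => a; apply/forallP => b.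
  by apply/implyP => ha; apply/implyP => hb; apply/implyP => hab; apply: h.
move=> /forallP h a b ha hb hab.
by move: (h a) => /forallP /(_ b); rewrite ha hb hab.
Qed.

Lemma ex_max K0 : clique Rl K0 -> exists K, maximal_clique Rl K /\ K0 \subset K.
Proof.
move=> hK0.
pose Pc K := cliqueb K && (K0 \subset K).
have hP0 : Pc K0 by rewrite /Pc subxx andbT; apply/cliqueP.
case: (arg_maxnP (fun K : {set 'I_n} => #|K|) hP0) => K /andP[hK hsub] hmax.
exists K; split => //; split; first by apply/cliqueP.
move=> K' hK' hKK'; apply/eqP; rewrite eq_sym eqEcard hKK' /=.
apply: hmax; rewrite /Pc (subset_trans hsub hKK') andbT; exact/cliqueP.
Qed.

Lemma pair_clique i j : Rl i j -> clique Rl [set i; j].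
Proof.
move=> hij a b; rewrite !inE => ha hb hne; rewrite /gadj hne /=.
case/orP: ha => /eqP ha; case/orP: hb => /eqP hb; subst a b => //.
- by rewrite eqxx in hne.
- by case: hR => _ s; rewrite s.
- by rewrite eqxx in hne.
Qed.

End Cliques.

Local Open Scope complex_scope.

Theorem mainTheorem3 (R : realType) (n : nat) (Rl : rel 'I_n)
    (hR : tolerance Rl) (hchordal : chordal (gadj Rl))
    (x : 'M[R[i]]_n) (hx : dual_cone Rl x) (hx0 : x != 0) :
  extremal_ray (dual_cone Rl) x <->
  (forall K : {set 'I_n}, maximal_clique Rl K -> (\rank (subsq K x) <= 1)%N) /\
  induced_connected Rl [set j | x j j != 0].
Proof.
split.
  move=> hext; split.
    by move=> K [hK _]; exact: (onlyif_rank hR hx hx0 hext hK).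
  exact: (onlyif_conn hR hx hext).
case=> hrank hconn.
have hminor : forall i j, Rl i j -> x i i * x j j = x i j * x j i.
  move=> i j hij.
  have [K [hK hsub]] := ex_max (pair_clique hR hij).
  have hiK : i \in K by apply: (subsetP hsub); rewrite !inE eqxx.
  have hjK : j \in K by apply: (subsetP hsub); rewrite !inE eqxx orbT.
  have := rank_minor (hrank K hK) (enum_rank_in hiK i) (enum_rank_in hiK i)
     (enum_rank_in hiK j) (enum_rank_in hiK j).
  by rewrite !mxE !(enum_rankK_in hiK).
split => // p1 p2 h1 h2 [l hl hsum].
split.
  exact: (if_core hR hx hx0 hminor hconn h1 h2 hsum).
by apply: (if_core hR hx hx0 hminor hconn h2 h1); rewrite addrC hsum.
Qed.
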